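(* Let $\eta=\frac{1+\sqrt5}{2}$ and $N=\mathbf{Z}[\eta]=\mathbf{Z}e_1\oplus\mathbf{Z}e_2$ with $e_1=1$, $e_2=\eta$. Let $b:N\times N\to\mathbf{Z}$ be a symmetric bilinear form such that $(N,b)$ is an even hyperbolic lattice and multiplication by $\eta^2$ is an isometry of $(N,b)$. Then: \begin{enumerate} \item The Gram matrix of $b$ with respect to $(e_1,e_2)$ has the form $\begin{pmatrix}2q&q\\ q&-2q\end{pmatrix}$ for some nonzero integer $q$. Conversely, for every nonzero integer $q$ this matrix defines an even hyperbolic lattice on $N$ for which multiplication by $\eta^2$ is an isometry. \item With $q$ as in (1), the discriminant group satisfies $N^*/N=\langle e_2/q\rangle\oplus\langle (e_1-2e_2)/(5q)\rangle\simeq \mathbf{Z}/q\mathbf{Z}\oplus\mathbf{Z}/5q\mathbf{Z}$. \item With $q$ as in (1), there is no $x\in N$ with $b(x,x)=0$. Moreover, there is no $x\in N$ with $b(x,x)=\pm2$ if and only if $q\neq\pm1$. \item With $q$ as in (1), multiplication by $\eta^6$ acts on $N^*/N$ as $-\mathrm{id}_{N^*/N}$ if and only if $q\in\{\pm1,\pm2\}$. \end{enumerate}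
   Context: A pair $(N,b)$, with $b$ a $\mathbf{Z}$-valued symmetric bilinear form on $N\cong\mathbf{Z}^2$, is an even hyperbolic lattice if $b(x,x)$ is even for all $x$ (equivalently, the diagonal entries of the Gram matrix are even) and the Gram matrix has signature $(1,1)$. In this case $b$ induces an embedding $N\subset N^*:=\mathrm{Hom}_{\mathbf{Z}}(N,\mathbf{Z})\subset N\otimes\mathbf{Q}$, and $N^*/N$ is called the discriminant group. A $\mathbf{Z}$-module automorphism $f$ of $N$ is an isometry if $b(f(x),f(y))=b(x,y)$ for all $x,y$. An isometry induces an automorphism of $N^*/N$ via its $\mathbf{Q}$-linear extension. Multiplication by $\eta^k$ is the $\mathbf{Z}$-module automorphism $p(\eta)\mapsto\eta^kp(\eta)$ of $N$. *)

(* Defs.v *)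
From HB Require Import structures.
From mathcomp Require Import all_boot all_order all_algebra.
Set Implicit Arguments. Unset Strict Implicit. Unset Printing Implicit Defensive.
Import Order.TTheory GRing.Theory Num.Theory.
Local Open Scope ring_scope.

(* N = Z[eta] is identified with 'cV[int]_2 via the coordinates w.r.t.
   (e1, e2) = (1, eta); N (x) Q with 'cV[rat]_2. *)

Definition bform (R : nzRingType) (G : 'M[R]_2) (x y : 'cV[R]_2) : R :=
  (x^T *m G *m y) 0 0.

Definition e1 (R : nzRingType) : 'cV[R]_2 := \col_(i < 2) (if (i : nat) == 0%N then 1 else 0).
Definition e2 (R : nzRingType) : 'cV[R]_2 := \col_(i < 2) (if (i : nat) == 1%N then 1 else 0).

(* Multiplication by eta on coordinates: eta*(a + b eta) = b + (a+b) eta,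
   since eta^2 = eta + 1.  Its matrix (acting on column vectors): *)
Definition etaM (R : nzRingType) : 'M[R]_2 :=
  \matrix_(i < 2, j < 2) (if ((i : nat) == 0%N) && ((j : nat) == 0%N) then 0 else 1).

Definition mul_eta_pow (R : nzRingType) (k : nat) (x : 'cV[R]_2) : 'cV[R]_2 :=
  (etaM R ^+ k) *m x.

Definition intQ (G : 'M[int]_2) : 'M[rat]_2 := map_mx (fun z : int => z%:~R) G.
Definition vecQ (x : 'cV[int]_2) : 'cV[rat]_2 := map_mx (fun z : int => z%:~R) x.

Definition symmetric_form (G : 'M[int]_2) : Prop := forall x y, bform G x y = bform G y x.

Definition even_form (G : 'M[int]_2) : Prop := forall x, (2 %| bform G x x)%Z.

(* signature (1,1): the Gram matrix is congruent over Q (hence over R) to a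
   diagonal matrix with one positive and one negative diagonal entry *)
Definition signature_1_1 (G : 'M[int]_2) : Prop :=
  exists (P : 'M[rat]_2) (d1 d2 : rat),
    [/\ P \in unitmx, 0 < d1, d2 < 0 &
        P^T *m intQ G *m P =
          \matrix_(i < 2, j < 2) (if i == j then (if (i : nat) == 0%N then d1 else d2) else 0)].

Definition even_hyperbolic (G : 'M[int]_2) : Prop :=
  [/\ symmetric_form G, even_form G & signature_1_1 G].

Definition is_isometry (G : 'M[int]_2) (f : 'cV[int]_2 -> 'cV[int]_2) : Prop :=
  [/\ (forall x y, f (x + y) = f x + f y), bijective f &
      forall x y, bform G (f x) (f y) = bform G x y].

Definition inN (v : 'cV[rat]_2) : Prop := exists x : 'cV[int]_2, v = vecQ x.

Definition in_dual (G : 'M[int]_2) (v : 'cV[rat]_2) : Prop :=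
  forall x : 'cV[int]_2, exists z : int, bform (intQ G) v (vecQ x) = z%:~R.

Definition gram (q : int) : 'M[int]_2 :=
  \matrix_(i < 2, j < 2)
    (if i == j then (if (i : nat) == 0%N then 2 * q else - (2 * q)) else q).

(* Main.v *)
Require Import Defs.
From HB Require Import structures.
From mathcomp Require Import all_boot all_order all_algebra.
From mathcomp Require Import ring lra zify.
Import Order.TTheory GRing.Theory Num.Theory.
Local Open Scope ring_scope.

Lemma sum2 (R : nmodType) (F : 'I_2 -> R) : \sum_(i < 2) F i = F 0 + F 1.
Proof. rewrite big_ord_recl big_ord1. congr (_ + F _). exact: val_inj. Qed.

Lemma bformE (R : comNzRingType) (G : 'M[R]_2) x y : bform G x y =
  x 0 0 * (G 0 0 * y 0 0 + G 0 1 * y 1 0) + x 1 0 * (G 1 0 * y 0 0 + G 1 1 * y 1 0).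
Proof. rewrite /bform !mxE !sum2 !mxE !sum2 !mxE. ring. Qed.

Lemma ord2P (i : 'I_2) : i = 0 \/ i = 1.
Proof. case: i => [[|[|//]]] Hi; [left|right]; exact: val_inj. Qed.

Lemma col2_eq (R : Type) (x y : 'cV[R]_2) :
  x 0 0 = y 0 0 -> x 1 0 = y 1 0 -> x = y.
Proof. move=> h0 h1; apply/matrixP => i j; rewrite (ord1 j).
by case: (ord2P i) => ->. Qed.

Lemma mx2_eq (R : Type) (x y : 'M[R]_2) :
  x 0 0 = y 0 0 -> x 0 1 = y 0 1 -> x 1 0 = y 1 0 -> x 1 1 = y 1 1 -> x = y.
Proof. move=> h0 h1 h2 h3; apply/matrixP => i j.
by case: (ord2P i) => ->; case: (ord2P j) => ->. Qed.

Definition mkv {R : nzRingType} (a b : R) : 'cV[R]_2 :=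
  \col_(i < 2) (if (i : nat) == 0%N then a else b).
Lemma mkv0 (R : nzRingType) (a b : R) : mkv a b 0 0 = a. Proof. by rewrite mxE. Qed.
Lemma mkv1 (R : nzRingType) (a b : R) : mkv a b 1 0 = b. Proof. by rewrite mxE. Qed.
Lemma e1_0 (R : nzRingType) : e1 R 0 0 = 1. Proof. by rewrite mxE. Qed.
Lemma e1_1 (R : nzRingType) : e1 R 1 0 = 0. Proof. by rewrite mxE. Qed.
Lemma e2_0 (R : nzRingType) : e2 R 0 0 = 0. Proof. by rewrite mxE. Qed.
Lemma e2_1 (R : nzRingType) : e2 R 1 0 = 1. Proof. by rewrite mxE. Qed.
Lemma gram00 q : gram q 0 0 = 2 * q. Proof. by rewrite mxE. Qed.
Lemma gram01 q : gram q 0 1 = q. Proof. by rewrite mxE. Qed.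
Lemma gram10 q : gram q 1 0 = q. Proof. by rewrite mxE. Qed.
Lemma gram11 q : gram q 1 1 = - (2 * q). Proof. by rewrite mxE. Qed.
Lemma intQE G i j : intQ G i j = (G i j)%:~R. Proof. by rewrite mxE. Qed.
Lemma vecQE x i j : vecQ x i j = (x i j)%:~R. Proof. by rewrite mxE. Qed.
Lemma etaME (R : nzRingType) i j : etaM R i j = if ((i : nat) == 0%N) && ((j : nat) == 0%N) then 0 else 1.
Proof. by rewrite mxE. Qed.

Lemma mep2_0 (R : comNzRingType) x : mul_eta_pow 2 x 0 0 = x 0 0 + x 1 0 :> R.
Proof. rewrite /mul_eta_pow expr2 -mulmxE !mxE !sum2 !mxE !sum2 !mxE /=. ring. Qed.
Lemma mep2_1 (R : comNzRingType) x : mul_eta_pow 2 x 1 0 = x 0 0 + 2 * x 1 0 :> R.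
Proof. rewrite /mul_eta_pow expr2 -mulmxE !mxE !sum2 !mxE !sum2 !mxE /=. ring. Qed.

Lemma mepS (R : comNzRingType) k x : mul_eta_pow k.+1 x = mkv (mul_eta_pow k x 1 0) (mul_eta_pow k x 0 0 + mul_eta_pow k x 1 0) :> 'cV[R]_2.
Proof. rewrite /mul_eta_pow exprS -mulmxE -mulmxA.
apply: col2_eq; rewrite ?mkv0 ?mkv1 !mxE !sum2 !mxE !sum2 /=; ring. Qed.

Lemma mep6_0 (R : comNzRingType) x : mul_eta_pow 6 x 0 0 = 5 * x 0 0 + 8 * x 1 0 :> R.
Proof. rewrite !mepS !(mkv0, mkv1) /mul_eta_pow expr0 mul1mx. ring. Qed.
Lemma mep6_1 (R : comNzRingType) x : mul_eta_pow 6 x 1 0 = 8 * x 0 0 + 13 * x 1 0 :> R.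
Proof. rewrite !mepS !(mkv0, mkv1) /mul_eta_pow expr0 mul1mx. ring. Qed.

Definition mkm {R : nzRingType} (a b c d : R) : 'M[R]_2 :=
  \matrix_(i < 2, j < 2) (if (i : nat) == 0%N then (if (j : nat) == 0%N then a else b)
                          else (if (j : nat) == 0%N then c else d)).
Lemma mkm00 (R : nzRingType) (a b c d : R) : mkm a b c d 0 0 = a. Proof. by rewrite mxE. Qed.
Lemma mkm01 (R : nzRingType) (a b c d : R) : mkm a b c d 0 1 = b. Proof. by rewrite mxE. Qed.
Lemma mkm10 (R : nzRingType) (a b c d : R) : mkm a b c d 1 0 = c. Proof. by rewrite mxE. Qed.
Lemma mkm11 (R : nzRingType) (a b c d : R) : mkm a b c d 1 1 = d. Proof. by rewrite mxE. Qed.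
Lemma diagE (R : nzRingType) (d1 d2 : R) i j :
  (\matrix_(i < 2, j < 2) (if i == j then (if (i : nat) == 0%N then d1 else d2) else 0)) i j
  = mkm d1 0 0 d2 i j.
Proof. by rewrite !mxE; case: (ord2P i) => ->; case: (ord2P j) => ->. Qed.
Lemma id2E (R : nzRingType) i j : (1%:M : 'M[R]_2) i j = mkm 1 0 0 1 i j.
Proof. by rewrite !mxE; case: (ord2P i) => ->; case: (ord2P j) => ->. Qed.
Lemma mul2E (R : nzRingType) (A : 'M[R]_(2,2)) n (B : 'M[R]_(2,n)) i j :
  (A *m B) i j = A i 0 * B 0 j + A i 1 * B 1 j.
Proof. by rewrite mxE sum2. Qed.
Lemma tr2E (R : nzRingType) (A : 'M[R]_2) i j : A^T i j = A j i.
Proof. by rewrite mxE. Qed.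
Lemma mxZE (R : nzRingType) m n (a : R) (A : 'M[R]_(m,n)) i j : (a *: A) i j = a * A i j.
Proof. by rewrite mxE. Qed.
Lemma mxDE (R : nzRingType) m n (A B : 'M[R]_(m,n)) i j : (A + B) i j = A i j + B i j.
Proof. by rewrite mxE. Qed.
Lemma mxNE (R : nzRingType) m n (A : 'M[R]_(m,n)) i j : (- A) i j = - A i j.
Proof. by rewrite mxE. Qed.
Lemma mx0E (R : nzRingType) m n i j : (0 : 'M[R]_(m,n)) i j = 0.
Proof. by rewrite mxE. Qed.

Ltac simpE := rewrite ?(e1_0, e1_1, e2_0, e2_1, gram00, gram01, gram10, gram11, mkv0, mkv1,
   mep2_0, mep2_1, mep6_0, mep6_1, intQE, vecQE, mkm00, mkm01, mkm10, mkm11, mxZE, mxDE, mxNE, mx0E).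
Ltac simpEh H := rewrite ?(e1_0, e1_1, e2_0, e2_1, gram00, gram01, gram10, gram11, mkv0, mkv1,
   mep2_0, mep2_1, mep6_0, mep6_1, intQE, vecQE) in H.

Lemma part1a G : even_hyperbolic G -> is_isometry G (mul_eta_pow 2) -> exists q, q != 0 /\ G = gram q.
Proof.
case=> Hsym _ [P [d1 [d2 [_ d1p _ HP]]]] [_ _ Hiso].
have s := Hsym (e1 int) (e2 int).
have i11 := Hiso (e1 int) (e1 int).
have i12 := Hiso (e1 int) (e2 int).
have i22 := Hiso (e2 int) (e2 int).
rewrite !bformE in s i11 i12 i22; simpEh s; simpEh i11; simpEh i12; simpEh i22.
have HG : G = gram (G 0 1).
  apply: mx2_eq; simpE; move: s i11 i12 i22; move: (G 0 0) (G 0 1) (G 1 0) (G 1 1) => a b c d; rewrite ?(mulr0, mul0r, mulr1, mul1r, addr0, add0r) => *; lia.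
exists (G 0 1); split => //.
apply/eqP => Hq; rewrite Hq in HG; rewrite HG in HP.
have := congr1 (fun A : 'M[rat]_2 => A 0 0) HP; rewrite /= !mxE !sum2 !mxE !sum2 !mxE /=.
simpE. move=> H.
suff : d1 = 0 by move=> E; rewrite E in d1p.
rewrite -H. ring.
Qed.
Lemma part1b q : q != 0 -> even_hyperbolic (gram q) /\ is_isometry (gram q) (mul_eta_pow 2).
Proof.
move=> q0; split; [split|split].
- by move=> x y; rewrite !bformE; simpE; ring.
- move=> x; rewrite bformE; simpE; apply/dvdzP.
  exists (q * (x 0 0 * x 0 0 + x 0 0 * x 1 0 - x 1 0 * x 1 0)); ring.
- case: (ltgtP q 0) => hq; last by rewrite hq eqxx in q0.
  + have hq' : (q%:~R : rat) < 0 by rewrite ltrz0.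
    exists (mkm 1 1 (-2) 0), (-10 * q%:~R), (2 * q%:~R); split.
    * apply: (proj1 (@mulmx1_unit _ _ _ (mkm 0 (-1/2) 1 (1/2)) _)).
      apply: mx2_eq; rewrite ?id2E !mul2E; simpE; by field.
    * lra.
    * lra.
    * apply: mx2_eq; rewrite diagE !mul2E !tr2E; simpE; rewrite ?intrM; ring.
  + have hq' : (0 : rat) < q%:~R by rewrite ltr0z.
    exists (mkm 1 1 0 (-2)), (2 * q%:~R), (-10 * q%:~R); split.
    * apply: (proj1 (@mulmx1_unit _ _ _ (mkm 1 (1/2) 0 (-1/2)) _)).
      apply: mx2_eq; rewrite ?id2E !mul2E; simpE; by field.
    * lra.
    * lra.
    * apply: mx2_eq; rewrite diagE !mul2E !tr2E; simpE; rewrite ?intrM; ring.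
- by move=> x y; rewrite /mul_eta_pow mulmxDr.
- exists (fun x => mkm 2 (-1) (-1) 1 *m x) => x; apply: col2_eq; 
    rewrite ?(mep2_0, mep2_1) mul2E ?(mep2_0, mep2_1) ?mul2E; simpE; ring.
- by move=> x y; rewrite !bformE; simpE; ring.
Qed.
Lemma part2 (q : int) : q != 0 ->
     let u : 'cV[rat]_2 := (q%:~R)^-1 *: e2 rat in
     let w : 'cV[rat]_2 := ((5 * q)%:~R)^-1 *: (e1 rat - 2%:R *: e2 rat) in
     [/\ in_dual (gram q) u, in_dual (gram q) w,
         (forall v, in_dual (gram q) v ->
            exists a c : int, inN (v - (a%:~R *: u + c%:~R *: w))) &
         (forall a c : int,
            inN (a%:~R *: u + c%:~R *: w) <-> ((q %| a)%Z /\ (5 * q %| c)%Z))].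
Proof.
move=> q0 u w.
have hq : (q%:~R : rat) != 0 by rewrite intr_eq0.
have u0 : u 0 0 = 0 by rewrite /u mxE e2_0 mulr0.
have u1 : u 1 0 = (q%:~R)^-1 by rewrite /u mxE e2_1 mulr1.
have w0 : w 0 0 = (5 * q%:~R)^-1.
  by rewrite /w; simpE; rewrite intrM; field; rewrite ?hq.
have w1 : w 1 0 = - 2 * (5 * q%:~R)^-1.
  by rewrite /w; simpE; rewrite intrM; field; rewrite ?hq.
clearbody u w.
split.
- move=> x; exists (x 0 0 - 2 * x 1 0); rewrite bformE u0 u1; simpE.
  rewrite intrB intrM; field; rewrite ?hq ?andbT //.
- move=> x; exists (x 1 0); rewrite bformE w0 w1; simpE.
  rewrite ?intrM; field; rewrite ?hq ?andbT //.
- move=> v Hv.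
  have [z1 E1] := Hv (e1 int); have [z2 E2] := Hv (e2 int).
  rewrite bformE in E1; rewrite bformE in E2; simpE; rewrite ?(e1_0, e1_1, e2_0, e2_1, gram00, gram01, gram10, gram11, intQE, vecQE) in E1 E2.
  exists z1, (2 * z1 + z2), 0; apply: col2_eq; simpE; rewrite ?(u0, u1, w0, w1).
  + rewrite intrD intrM -E1 -E2 ?intrM ?intrN. field; rewrite ?hq ?andbT //.
  + rewrite intrD intrM -E1 -E2 ?intrM ?intrN. field; rewrite ?hq ?andbT //.
- move=> a c; split.
  + case=> x Ex.
    have X0 := congr1 (fun A : 'cV[rat]_2 => A 0 0) Ex.
    have X1 := congr1 (fun A : 'cV[rat]_2 => A 1 0) Ex.
    rewrite /= ?(mxZE, mxDE, u0, u1, w0, w1, vecQE) in X0 X1.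
    have Hc : c = x 0 0 * (5 * q).
      apply: (@intr_inj rat); rewrite !intrM -X0; field; rewrite ?hq ?andbT //.
    have Ha : a = (x 1 0 + 2 * x 0 0) * q.
      apply: (@intr_inj rat); rewrite !intrM intrD intrM -X0 -X1; field; rewrite ?hq ?andbT //.
    by split; apply/dvdzP; [exists (x 1 0 + 2 * x 0 0) | exists (x 0 0)].
  + case=> /dvdzP [k ->] /dvdzP [l ->].
    exists (mkv l (k - 2 * l)); apply: col2_eq; simpE; rewrite ?(u0, u1, w0, w1).
    * rewrite !intrM; field; rewrite ?hq ?andbT //.
    * rewrite !intrM intrB intrM; field; rewrite ?hq ?andbT //.
Qed.
Lemma noiso (a b : int) : a*a + a*b - b*b = 0 -> a = 0 /\ b = 0.
Proof.
move=> H.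
have E : (2*a+b)^+2 = 5 * b^+2.
  apply/eqP; rewrite -subr_eq0.
  have -> : (2*a+b)^+2 - 5*b^+2 = 4 * (a*a+a*b-b*b) by ring.
  by rewrite H mulr0.
have En := congr1 absz E; rewrite abszX abszM abszX in En.
case: (posnP `|b|%N) => hb.
  have b0 : b = 0 by lia.
  rewrite b0 mulr0 subr0 addr0 in H.
  by move/eqP: H; rewrite mulf_eq0 orbb => /eqP.
have ha : (0 < `|(2 * a + b)%R|)%N.
  rewrite lt0n; apply/eqP => h; rewrite h in En.
  move: En; rewrite exp0n //; lia.
have := congr1 (logn 5) En.
rewrite lognX lognM ?expn_gt0 ?hb // lognX (logn_prime 5 (isT : prime 5)) eqxx /=.
lia.
Qed.

Lemma bform_gram q x : bform (gram q) x x = 2 * q * (x 0 0 * x 0 0 + x 0 0 * x 1 0 - x 1 0 * x 1 0).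
Proof. rewrite bformE; simpE; ring. Qed.

Lemma unit1 (q f : int) : q * f = 1 \/ q * f = -1 -> q = 1 \/ q = -1.
Proof.
move=> H; have : (`|q| * `|f| = 1)%N by case: H => H; rewrite -abszM H.
move/eqP; rewrite muln_eq1 => /andP [/eqP hq _]; lia.
Qed.

Lemma part3 (q : int) : q != 0 ->
     (forall x : 'cV[int]_2, x != 0 -> bform (gram q) x x != 0) /\
     ((~ exists x : 'cV[int]_2, bform (gram q) x x = 2 \/ bform (gram q) x x = -2)
        <-> (q != 1 /\ q != -1)).
Proof.
move=> q0; split.
- move=> x x0; rewrite bform_gram; apply/negP => /eqP H.
  move: H => /eqP; rewrite !mulf_eq0 (negbTE q0) /= => /eqP /noiso [h0 h1].
  move/eqP: x0; apply; apply: col2_eq; by rewrite ?h0 ?h1 mx0E.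
- split.
  + move=> H; split; apply/eqP => Hq; apply: H; exists (mkv 1 0);
    rewrite bform_gram mkv0 mkv1 Hq; [left|right]; ring.
  + case=> h1 h2 [x H]; rewrite !bform_gram in H.
    have := @unit1 q (x 0 0 * x 0 0 + x 0 0 * x 1 0 - x 1 0 * x 1 0).
    case.
      have n2 : (2 : int) != 0 by [].
      by case: H => H; [left|right]; apply: (mulfI n2); rewrite mulrA H ?mulr1 ?mulrN1.
    * by move=> e; rewrite e eqxx in h1.
    * by move=> e; rewrite e eqxx in h2.
Qed.

Lemma divbound (q f : int) (n : nat) : q * f = n%:Z -> (0 < n)%N -> (`|q| <= n)%N.
Proof. move=> H n0. apply: dvdn_leq => //. apply/dvdnP; exists `|f|%N.
have := congr1 absz H; rewrite abszM /=. lia. Qed.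

Lemma part4 (q : int) : q != 0 ->
     ((forall v, in_dual (gram q) v -> inN (mul_eta_pow 6 v + v))
        <-> (q \in [:: 1; -1; 2; -2])).
Proof.
move=> q0; have hq : (q%:~R : rat) != 0 by rewrite intr_eq0.
split.
- move=> H.
  have [Hu _ _ _] := @part2 q q0.
  have [x Ex] := H _ Hu.
  have X0 := congr1 (fun A : 'cV[rat]_2 => A 0 0) Ex.
  have X1 := congr1 (fun A : 'cV[rat]_2 => A 1 0) Ex.
  rewrite /= mxDE mep6_0 ?(mxZE, e2_0, e2_1, vecQE) in X0.
  rewrite /= mxDE mep6_1 ?(mxZE, e2_0, e2_1, vecQE) in X1.
  have K : q * (2 * x 0 0 - x 1 0) = (2%N : int).
    apply: (@intr_inj rat); rewrite intrM intrB intrM -X0 -X1; field; rewrite ?hq //.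
  have := @divbound _ _ _ K isT.
  have q0' : q <> 0 by apply/eqP.
  move=> qb.
  have hh : q = 1 \/ q = -1 \/ q = 2 \/ q = -2 by lia.
  by case: hh => [->|[->|[->|->]]].
- rewrite !inE => /or4P hmem v Hv.
  have [z1 E1] := Hv (e1 int); have [z2 E2] := Hv (e2 int).
  rewrite bformE in E1; rewrite bformE in E2.
  rewrite ?(e1_0, e1_1, e2_0, e2_1, gram00, gram01, gram10, gram11, intQE, vecQE) in E1 E2.
  case: hmem => /eqP hq1; subst q.
  + exists (mkv (2 * (2 * z1 - z2)) (2 * (3 * z1 - 2 * z2))); apply: col2_eq; simpE;
    rewrite ?(intrM, intrB) -E1 -E2; ring.
  + exists (mkv (-2 * (2 * z1 - z2)) (-2 * (3 * z1 - 2 * z2))); apply: col2_eq; simpE;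
    rewrite ?(intrM, intrB) -E1 -E2; ring.
  + exists (mkv (2 * z1 - z2) (3 * z1 - 2 * z2)); apply: col2_eq; simpE;
    rewrite ?(intrM, intrB) -E1 -E2; ring.
  + exists (mkv (- (2 * z1 - z2)) (- (3 * z1 - 2 * z2))); apply: col2_eq; simpE;
    rewrite ?(intrM, intrB, intrN) -E1 -E2; ring.
Qed.

Theorem proposition3p3 :
  (* (1) *)
  (forall G : 'M[int]_2,
      even_hyperbolic G -> is_isometry G (mul_eta_pow 2) ->
      exists q : int, q != 0 /\ G = gram q) /\
  (forall q : int, q != 0 ->
      even_hyperbolic (gram q) /\ is_isometry (gram q) (mul_eta_pow 2)) /\
  (* (2) *)
  (forall q : int, q != 0 ->
     let u : 'cV[rat]_2 := (q%:~R)^-1 *: e2 rat in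
     let w : 'cV[rat]_2 := ((5 * q)%:~R)^-1 *: (e1 rat - 2%:R *: e2 rat) in
     [/\ in_dual (gram q) u, in_dual (gram q) w,
         (forall v, in_dual (gram q) v ->
            exists a c : int, inN (v - (a%:~R *: u + c%:~R *: w))) &
         (forall a c : int,
            inN (a%:~R *: u + c%:~R *: w) <-> ((q %| a)%Z /\ (5 * q %| c)%Z))]) /\
  (* (3) *)
  (forall q : int, q != 0 ->
     (forall x : 'cV[int]_2, x != 0 -> bform (gram q) x x != 0) /\
     ((~ exists x : 'cV[int]_2, bform (gram q) x x = 2 \/ bform (gram q) x x = -2)
        <-> (q != 1 /\ q != -1))) /\
  (* (4) *)
  (forall q : int, q != 0 ->
     ((forall v, in_dual (gram q) v -> inN (mul_eta_pow 6 v + v))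
        <-> (q \in [:: 1; -1; 2; -2]))).
Proof.
split; first exact: part1a.
split; first exact: part1b.
split; first exact: part2.
split; first exact: part3.
exact: part4.
Qed.
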